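(* For any non-negative, non-increasing stepsize sequence $\{\alpha(t)\}$, any $\eta>0$ and all $T\in\mathbb{N}$, the iterates of the distributed regularized primal-dual algorithm described in the context satisfy \[ \sum_{t=0}^{T-1}\sum_{i=1}^n\alpha(t)\eta\|\lambda_i(t)\|^2-\sum_{t=0}^{T-1}\sum_{i=1}^n\alpha^2(t)\|\nabla_\lambda L_i(x_i(t),\lambda_i(t))\|^2\le\sum_{t=0}^{T-1}\sum_{i=1}^n2\alpha(t)\langle g(x_i(t)),\lambda_i(t)\rangle. \]
   Context: Norms are Euclidean. Problem data: $f_i:\mathbb{R}^d\to\mathbb{R}$, $i=1,\dots,n$, and $g=(g_1,\dots,g_m)^T$ with $g_k:\mathbb{R}^d\to\mathbb{R}$, all convex on $\mathbb{B}_d(R)=\{x:\|x\|\le R\}$ with subgradients bounded by $L$ there. $W\in\mathbb{R}^{n\times n}$ is a doubly stochastic matrix (supported on the edges of a connected graph). Regularized Lagrangian of agent $i$: $L_i(x,\lambda)=f_i(x)+\langle\lambda,g(x)\rangle-\frac{\eta}{2}\|\lambda\|^2$, with subgradients $\nabla_xL_i(x,\lambda)=\nabla f_i(x)+\sum_{k=1}^m\lambda_k\nabla g_k(x)$ and $\nabla_\lambda L_i(x,\lambda)=g(x)-\eta\lambda$. Algorithm: $x_i(0)=0$, $\lambda_i(0)=0$; for $t=0,1,2,\dots$: $y_i(t)=x_i(t)-\alpha(t)\nabla_xL_i(x_i(t),\lambda_i(t))$, $\gamma_i(t)=\lambda_i(t)+\alpha(t)\nabla_\lambda L_i(x_i(t),\lambda_i(t))$,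 $x_i(t+1)=\Pi_{\mathbb{B}_d(R)}(\sum_j W_{ij}y_j(t))$, $\lambda_i(t+1)=\Pi_{\mathbb{R}^m_+}(\sum_jW_{ij}\gamma_j(t))$, where $\Pi$ denotes Euclidean projection. *)

(* Defs.v *)
From mathcomp Require Import all_boot all_order all_algebra.
Set Implicit Arguments. Unset Strict Implicit. Unset Printing Implicit Defensive.
Import Order.TTheory GRing.Theory Num.Theory.
Local Open Scope ring_scope.

Section Defs.
Variable R : rcfType.

Definition dotv (k : nat) (u v : 'cV[R]_k) : R := \sum_(l < k) u l 0 * v l 0.
Definition normv (k : nat) (u : 'cV[R]_k) : R := Num.sqrt (dotv u u).

Definition in_ball (d : nat) (Rad : R) (x : 'cV[R]_d) : Prop := normv x <= Rad.
Definition in_orthant (m : nat) (x : 'cV[R]_m) : Prop := forall k : 'I_m, 0 <= x k 0.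

Definition is_proj (k : nat) (C : 'cV[R]_k -> Prop) (P : 'cV[R]_k -> 'cV[R]_k) : Prop :=
  forall y, C (P y) /\ (forall z, C z -> normv (y - P y) <= normv (y - z)).

Definition convex_on_ball (d : nat) (Rad : R) (h : 'cV[R]_d -> R) : Prop :=
  forall x y (a : R), in_ball Rad x -> in_ball Rad y -> 0 <= a -> a <= 1 ->
    h (a *: x + (1 - a) *: y) <= a * h x + (1 - a) * h y.
Definition bounded_subgrad_on_ball (d : nat) (Rad L : R)
    (h : 'cV[R]_d -> R) (dh : 'cV[R]_d -> 'cV[R]_d) : Prop :=
  forall x, in_ball Rad x ->
    normv (dh x) <= L /\ (forall y, in_ball Rad y -> h x + dotv (dh x) (y - x) <= h y).

Definition doubly_stochastic (n : nat) (W : 'M[R]_n) : Prop :=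
  (forall i j, 0 <= W i j) /\
  (forall i, \sum_(j < n) W i j = 1) /\ (forall j, \sum_(i < n) W i j = 1).

Definition supported_on_connected_graph (n : nat) (W : 'M[R]_n) (e : rel 'I_n) : Prop :=
  (forall i j, e i j = e j i) /\ (forall i j, connect e i j) /\
  (forall i j, W i j != 0 -> i != j -> e i j).

Variables (n d m : nat).
Variables (df : 'I_n -> 'cV[R]_d -> 'cV[R]_d)
          (g : 'I_m -> 'cV[R]_d -> R)
          (dg : 'I_m -> 'cV[R]_d -> 'cV[R]_d).

Definition gvec (x : 'cV[R]_d) : 'cV[R]_m := \col_(k < m) g k x.

Definition gradLx (eta : R) (i : 'I_n) (x : 'cV[R]_d) (lam : 'cV[R]_m) : 'cV[R]_d :=
  df i x + \sum_(k < m) lam k 0 *: dg k x.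
Definition gradLlam (eta : R) (i : 'I_n) (x : 'cV[R]_d) (lam : 'cV[R]_m) : 'cV[R]_m :=
  gvec x - eta *: lam.

Variables (eta : R) (alpha : nat -> R) (W : 'M[R]_n)
          (PB : 'cV[R]_d -> 'cV[R]_d) (PP : 'cV[R]_m -> 'cV[R]_m).

Fixpoint iterates (t : nat) : 'I_n -> 'cV[R]_d * 'cV[R]_m :=
  match t with
  | 0 => fun _ => (0, 0)
  | t'.+1 =>
    let s := iterates t' in
    let y := fun j => (s j).1 - alpha t' *: gradLx eta j (s j).1 (s j).2 in
    let gam := fun j => (s j).2 + alpha t' *: gradLlam eta j (s j).1 (s j).2 in
    fun i => (PB (\sum_(j < n) W i j *: y j), PP (\sum_(j < n) W i j *: gam j))
  end.

Definition xit (t : nat) (i : 'I_n) : 'cV[R]_d := (iterates t i).1.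
Definition lamit (t : nat) (i : 'I_n) : 'cV[R]_m := (iterates t i).2.

End Defs.

(* Main.v *)
Require Import Defs.
From mathcomp Require Import all_boot all_order all_algebra.
From mathcomp Require Import lra ring.
Import Order.TTheory GRing.Theory Num.Theory.
Local Open Scope ring_scope.

Section H.
Variable R : rcfType.

Lemma dotv_ge0 k (u : 'cV[R]_k) : 0 <= dotv u u.
Proof. by apply: sumr_ge0 => l _; rewrite -expr2 sqr_ge0. Qed.

Lemma normv_sq k (u : 'cV[R]_k) : normv u ^+ 2 = dotv u u.
Proof. by rewrite /normv sqr_sqrtr // dotv_ge0. Qed.

Lemma dotv0 k : dotv (0 : 'cV[R]_k) 0 = 0.
Proof. by apply: big1 => l _; rewrite mxE mul0r. Qed.

Lemma dotv_expand k (a G : 'cV[R]_k) (al et : R) :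
  dotv (a + al *: (G - et *: a)) (a + al *: (G - et *: a)) =
  dotv a a + 2 * al * dotv G a - 2 * (al * et * dotv a a)
  + al ^+ 2 * dotv (G - et *: a) (G - et *: a).
Proof.
rewrite /dotv !mulr_sumr -big_split -sumrB -big_split /=.
by apply: eq_bigr => l _; rewrite !mxE; ring.
Qed.

Lemma jensen_scalar n (w a : 'I_n -> R) :
  (forall j, 0 <= w j) -> \sum_j w j = 1 ->
  (\sum_j w j * a j) ^+ 2 <= \sum_j w j * a j ^+ 2.
Proof.
move=> w0 w1; set c := \sum_j w j * a j.
have H : 0 <= \sum_j w j * (a j - c) ^+ 2.
  by apply: sumr_ge0 => j _; rewrite mulr_ge0 // sqr_ge0.
have E : \sum_j w j * (a j - c) ^+ 2 =
   \sum_j w j * a j ^+ 2 - 2 * c * c + c ^+ 2 * \sum_j w j.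
  rewrite (eq_bigr (fun j => w j * a j ^+ 2 - 2 * c * (w j * a j) + c ^+ 2 * w j)); last by move=> j _; ring.
  by rewrite big_split sumrB /= -[\sum_(i < n) 2 * c * (w i * a i)]mulr_sumr -[\sum_(i < n) c ^+ 2 * w i]mulr_sumr.
rewrite w1 in E; move: H; rewrite E; lra.
Qed.

Lemma jensen_vec n k (w : 'I_n -> R) (v : 'I_n -> 'cV[R]_k) :
  (forall j, 0 <= w j) -> \sum_j w j = 1 ->
  dotv (\sum_j w j *: v j) (\sum_j w j *: v j) <= \sum_j w j * dotv (v j) (v j).
Proof.
move=> w0 w1; rewrite /dotv.
rewrite [X in _ <= X](eq_bigr (fun j => \sum_l w j * (v j l 0 * v j l 0))); last by move=> j _; rewrite mulr_sumr.
rewrite [X in _ <= X]exchange_big /=.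
apply: ler_sum => l _; rewrite summxE.
have -> : \sum_(j < n) (w j *: v j) l 0 = \sum_j w j * v j l 0.
  by apply: eq_bigr => j _; rewrite mxE.
rewrite -expr2.
have -> : \sum_(i < n) w i * (v i l 0 * v i l 0) = \sum_j w j * v j l 0 ^+ 2.
  by apply: eq_bigr => j _; rewrite expr2.
exact: (@jensen_scalar n w (fun j => v j l 0) w0 w1).
Qed.

End H.
Lemma proj_orth (R : rcfType) m (PP : 'cV[R]_m -> 'cV[R]_m) y :
  is_proj (@in_orthant R m) PP -> dotv (PP y) (PP y) <= dotv y y.
Proof.
move=> H; have [Pin Pmin] := H y; set p := PP y in Pin Pmin *.
apply: ler_sum => k _.
set q := if 0 <= y k 0 then y k 0 else 0.
have q0 : 0 <= q by rewrite /q; case: ifP.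
pose z : 'cV[R]_m := \col_l (if l == k then q else p l 0).
have Hz : in_orthant z by move=> l; rewrite mxE; case: eqP => _ //; apply: Pin.
have := Pmin z Hz; rewrite /normv ler_sqrt ?dotv_ge0 // /dotv.
rewrite (bigD1 k) //= [X in _ <= X -> _](bigD1 k) //=.
have -> : \sum_(i < m | i != k) (y - z) i 0 * (y - z) i 0 =
          \sum_(i < m | i != k) (y - p) i 0 * (y - p) i 0.
  by apply: eq_bigr => l /negbTE hl; rewrite !mxE hl.
rewrite lerD2r !mxE eqxx => Hk.
have pk0 := Pin k.
move: Hk; rewrite /q; case: ifP => hy Hk.
- have e : y k 0 - p k 0 = 0.
    apply/eqP; rewrite -sqrf_eq0 eq_le sqr_ge0 andbT expr2.
    by move: Hk; rewrite subrr mul0r.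
  have -> : p k 0 = y k 0 by move/eqP: e; rewrite subr_eq0 => /eqP ->.
  by [].
- move/negbT: hy; rewrite -ltNge => hy; nra.
Qed.
Theorem lemma6 (R : rcfType) (n d m : nat) (Rad L : R)
  (f : 'I_n -> 'cV[R]_d -> R) (df : 'I_n -> 'cV[R]_d -> 'cV[R]_d)
  (g : 'I_m -> 'cV[R]_d -> R) (dg : 'I_m -> 'cV[R]_d -> 'cV[R]_d)
  (W : 'M[R]_n) (e : rel 'I_n)
  (PB : 'cV[R]_d -> 'cV[R]_d) (PP : 'cV[R]_m -> 'cV[R]_m)
  (alpha : nat -> R) (eta : R) (T : nat) :
  (forall i, convex_on_ball Rad (f i)) ->
  (forall i, bounded_subgrad_on_ball Rad L (f i) (df i)) ->
  (forall k, convex_on_ball Rad (g k)) ->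
  (forall k, bounded_subgrad_on_ball Rad L (g k) (dg k)) ->
  doubly_stochastic W ->
  supported_on_connected_graph W e ->
  is_proj (in_ball Rad) PB ->
  is_proj (@in_orthant R m) PP ->
  (forall t, 0 <= alpha t) ->
  (forall t, alpha t.+1 <= alpha t) ->
  0 < eta ->
  \sum_(t < T) \sum_(i < n) alpha t * eta * normv (lamit df g dg eta alpha W PB PP t i) ^+ 2
  - \sum_(t < T) \sum_(i < n) alpha t ^+ 2 *
      normv (gradLlam g eta i (xit df g dg eta alpha W PB PP t i)
                               (lamit df g dg eta alpha W PB PP t i)) ^+ 2
  <= \sum_(t < T) \sum_(i < n) 2 * alpha t *
      dotv (gvec g (xit df g dg eta alpha W PB PP t i)) (lamit df g dg eta alpha W PB PP t i).
Proof.
move=> _ _ _ _ [W0 [Wr Wc]] _ _ HPP a0 _ eta0.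
set lam := lamit df g dg eta alpha W PB PP.
set x := xit df g dg eta alpha W PB PP.
pose gam t j := lam t j + alpha t *: gradLlam g eta j (x t j) (lam t j).
pose S t := \sum_(i < n) dotv (lam t i) (lam t i).
pose A t := \sum_(i < n) 2 * alpha t * dotv (gvec g (x t i)) (lam t i).
pose B t := \sum_(i < n) alpha t * eta * dotv (lam t i) (lam t i).
pose C t := \sum_(i < n) alpha t ^+ 2 *
   dotv (gradLlam g eta i (x t i) (lam t i)) (gradLlam g eta i (x t i) (lam t i)).
have lamS t i : lam t.+1 i = PP (\sum_(j < n) W i j *: gam t j) by [].
have step t : S t.+1 <= S t + A t - 2 * B t + C t.
  apply: (@le_trans _ _ (\sum_(i < n) dotv (\sum_(j < n) W i j *: gam t j)
                                           (\sum_(j < n) W i j *: gam t j))).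
    by apply: ler_sum => i _; rewrite lamS; apply: proj_orth.
  apply: (@le_trans _ _ (\sum_(i < n) \sum_(j < n) W i j * dotv (gam t j) (gam t j))).
    by apply: ler_sum => i _; apply: jensen_vec.
  rewrite exchange_big /=.
  have -> : \sum_(j < n) \sum_(i < n) W i j * dotv (gam t j) (gam t j) =
            \sum_(j < n) dotv (gam t j) (gam t j).
    by apply: eq_bigr => j _; rewrite -mulr_suml Wc mul1r.
  rewrite /S /A /B /C mulr_sumr -big_split -sumrB -big_split /=.
  rewrite le_eqVlt; apply/orP; left; apply/eqP; apply: eq_bigr => j _.
  by rewrite /gam /gradLlam dotv_expand.
have tele N : S N <= \sum_(t < N) (A t - 2 * B t + C t).
  elim: N => [|N IH].
    rewrite big_ord0 /S big1 // => i _.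
    by rewrite /lam /lamit /=; apply: dotv0.
  rewrite big_ord_recr /=; apply: le_trans (step N) _; lra.
have SN : 0 <= S T by apply: sumr_ge0 => i _; apply: dotv_ge0.
have BT : 0 <= \sum_(t < T) B t.
  apply: sumr_ge0 => t _; apply: sumr_ge0 => i _.
  by rewrite mulr_ge0 ?dotv_ge0 // mulr_ge0 // ltW.
have E0 : \sum_(t < T) (A t - 2 * B t + C t) =
  \sum_(t < T) A t - 2 * \sum_(t < T) B t + \sum_(t < T) C t.
  by rewrite big_split sumrB mulr_sumr.
have E1 : \sum_(t < T) \sum_(i < n) alpha t * eta * normv (lam t i) ^+ 2 = \sum_(t < T) B t.
  by apply: eq_bigr => t _; apply: eq_bigr => i _; rewrite normv_sq.
have E2 : \sum_(t < T) \sum_(i < n) alpha t ^+ 2 *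
      normv (gradLlam g eta i (x t i) (lam t i)) ^+ 2 = \sum_(t < T) C t.
  by apply: eq_bigr => t _; apply: eq_bigr => i _; rewrite normv_sq.
rewrite E1 E2.
have := tele T; rewrite E0; move: SN BT; rewrite /A; lra.
Qed.
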